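(* Let $X$ be a finite set and $A\subseteq X$ with $|A|$ even. \begin{enumerate} \item Let $(p_B)_{B\subseteq X}$ be nonnegative reals summing to $1$, $\tilde p_B=(p_B+p_{X\setminus B})/2$, $s_C=\sum_{B\in\mathcal{S}_C}p_B$ with $\mathcal{S}_C=\{B\subseteq X: C\cap B\neq\emptyset,\ C\cap(X\setminus B)\neq\emptyset\}$, and $\gamma_A=\sum_{B\subseteq X:\,|A\cap B|\text{ odd}}\tilde p_B$. Then \[ \gamma_A=\frac14\sum_{\substack{B\subseteq A\\|B|\text{ even}}}2^{|B|}\,\mathbb{E}_{|A|-|B|}\,s_B . \] \item Let $T$ be a phylogenetic tree with leaf set $X$ and nonnegative branch lengths, $\tilde w_B=w_{B|X\setminus B}/2$ where $w_{B|X\setminus B}$ is the length of the edge of $T$ whose deletion splits the leaves into $B$ and $X\setminus B$ (or $0$ if there is none), $\delta_C$ the sum of branch lengths of the smallest subtree of $T$ connecting $C$ ($0$ if $|C|\le1$), and $\mu_A=\sum_{B\subseteq X:\,|A\cap B|\text{ odd}}\tilde w_B$. Then \[ \mu_A=\frac14\sum_{\substack{B\subseteq A\\|B|\text{ even}}}2^{|B|}\,\mathbb{E}_{|A|-|B|}\,\delta_B . \] \end{enumerate}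
   Context: The Euler numbers $\mathbb{E}_k$ are defined by $\frac{1}{\cosh(x)}=\frac{2}{e^x+e^{-x}}=\sum_{k=0}^\infty \mathbb{E}_k\frac{x^k}{k!}$. $p_B$ is the probability that at a bi-allelic site exactly the taxa in $B$ have state $1$, and $s_C$ is the probability that a site is non-constant over $C$. A phylogenetic tree with leaf set $X$ is a tree whose leaves are bijectively labelled by $X$ and whose internal vertices have degree at least $3$. *)

(* Defs.v *)
From HB Require Import structures.
From mathcomp Require Import all_boot all_order all_algebra.
Set Implicit Arguments. Unset Strict Implicit. Unset Printing Implicit Defensive.
Import Order.TTheory GRing.Theory Num.Theory.
Local Open Scope ring_scope.

(* 1/cosh x = sum_k E_k x^k/k!.  Multiplying by cosh x = sum_{j even} x^j/j!
   and comparing coefficients of x^n/n! gives, for n >= 1,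
     sum_{k <= n, n-k even} C(n,k) E_k = 0,  and E_0 = 1.
   euler_seq n is the list [E_0; ...; E_n] computed by this recurrence. *)
Fixpoint euler_seq (n : nat) : seq int :=
  match n with
  | 0 => [:: 1]
  | m.+1 => let s := euler_seq m in
      rcons s (- \sum_(k < m.+1 | ~~ odd (m.+1 - k)) ('C(m.+1, k))%:Z * s`_k)
  end.

Definition euler (n : nat) : int := (euler_seq n)`_n.

Section Part1.
Variables (R : realFieldType) (X : finType) (p : {set X} -> R).

Definition ptilde (B : {set X}) : R := (p B + p (~: B)) / 2.

Definition Sset (C : {set X}) : {set {set X}} :=
  [set B : {set X} | (C :&: B != set0) && (C :&: ~: B != set0)].

Definition sC (C : {set X}) : R := \sum_(B in Sset C) p B.

Definition gammaA (A : {set X}) : R :=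
  \sum_(B : {set X} | odd #|A :&: B|) ptilde B.
End Part1.

Section Trees.
Variables (V : finType) (adj : rel V).

Definition acyclic : Prop :=
  forall (v0 : V) (q : seq V),
    uniq (v0 :: q) -> (2 <= size q)%N -> path adj v0 q -> ~~ adj (last v0 q) v0.

Definition is_tree : Prop :=
  symmetric adj /\ irreflexive adj /\ (forall u v, connect adj u v) /\ acyclic.

Definition degree (v : V) : nat := #|[set u | adj v u]|.

(* a leaf is a vertex of degree <= 1 (degree 0 only for the one-vertex tree) *)
Definition is_leaf (v : V) : bool := (degree v <= 1)%N.

Variable (X : finType) (phi : X -> V).

Definition phylo_tree : Prop :=
  is_tree /\ injective phi /\ (forall v, is_leaf v <-> exists x, phi x = v)
  /\ (forall v, ~~ is_leaf v -> (3 <= degree v)%N).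

Definition edges : {set {set V}} :=
  [set e : {set V} | [exists u, exists v, adj u v && (e == [set u; v])]].

Definition adj_del (e : {set V}) : rel V :=
  fun x y => adj x y && ([set x; y] != e).

(* one side of the split induced by deleting edge e: the leaves still
   connected to a chosen endpoint of e *)
Definition split_side (e : {set V}) : {set X} :=
  match [pick u in e] with
  | Some u => [set x | connect (adj_del e) (phi x) u]
  | None => set0
  end.

Variables (R : realFieldType) (w : {set V} -> R).

(* w_{B|X\B}: length of the edge inducing split B|X\B, 0 if there is none
   (there is at most one such edge in a phylogenetic tree) *)
Definition w_split (B : {set X}) : R :=
  \sum_(e in edges | (split_side e == B) || (split_side e == ~: B)) w e.

Definition wtilde (B : {set X}) : R := w_split B / 2.

Definition muA (A : {set X}) : R :=
  \sum_(B : {set X} | odd #|A :&: B|) wtilde B.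

Definition spans (C : {set X}) (S : {set V}) : bool :=
  (phi @: C \subset S) &&
  [forall x in S, forall y in S,
     connect (fun a b => [&& adj a b, a \in S & b \in S]) x y].

Definition min_subtree (C : {set X}) : {set V} :=
  [arg min_(S < setT | spans C S) #|S|].

Definition deltaC (C : {set X}) : R :=
  if (#|C| <= 1)%N then 0
  else \sum_(e in edges | e \subset min_subtree C) w e.
End Trees.

(* Main.v *)
Require Import Defs.
From HB Require Import structures.
From mathcomp Require Import all_boot all_order all_algebra.
Import Order.TTheory GRing.Theory Num.Theory.

Section TreeLemmas.
Variables (V : finType) (adj : rel V).
Hypothesis sym : symmetric adj.
Hypothesis irr : irreflexive adj.
Hypothesis conn : forall u v, connect adj u v.
Hypothesis acyc : acyclic adj.

Variables (p q : V) (e : {set V}).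
Hypothesis he : e = [set p; q].
Hypothesis hpq : adj p q.

Local Notation cd := (connect (adj_del adj e)).

Lemma del_sym : symmetric (adj_del adj e).
Proof. by move=> a b; rewrite /adj_del sym setUC. Qed.

Lemma cd_sym a b : cd a b = cd b a.
Proof. exact: (sym_connect_sym del_sym). Qed.

Lemma sep : ~~ cd p q.
Proof.
apply/negP => /connectP [s hs hlast].
move: hlast; case/shortenP: hs => s' hs' us _ hlast.
case: s' hs' us hlast => [|y [|z t]] hs' us hlast.
- by move: hpq; rewrite /= in hlast; rewrite -hlast irr.
- by move: hs'; rewrite /= in hlast; rewrite /= -hlast /adj_del he eqxx !andbF.
- have sr : subrel (adj_del adj e) adj by move=> a b /andP[].
  have hp := sub_path sr hs'.
  have := @acyc p _ us isT hp; rewrite -hlast sym hpq; by [].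
Qed.

Lemma cover z : cd z p || cd z q.
Proof.
have /connectP [s hs hlast] := conn z p.
elim: s z hs hlast => [|y s IH] z /=.
  by move=> _ ->; rewrite connect0.
case/andP => hzy hs hlast.
have := IH y hs hlast.
case hE: ([set z; y] == e).
  move=> _; have : z \in e by rewrite -(eqP hE) !inE eqxx.
  by rewrite he !inE => /orP[] /eqP ->; rewrite connect0 ?orbT.
have hd : cd z y by apply: connect1; rewrite /adj_del hzy hE.
by case/orP => h; rewrite (connect_trans hd h) ?orbT.
Qed.

Lemma cross a b : adj a b -> cd a b = false -> [set a; b] = e.
Proof.
move=> hab hc; apply/eqP; apply: contraFT hc => hne.
by apply: connect1; rewrite /adj_del hab hne.
Qed.


Variables (X : finType) (phi : X -> V).

Lemma must_cross (S : {set V}) s a :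
  path (fun a b => [&& adj a b, a \in S & b \in S]) a s -> ~~ cd a (last a s) ->
  exists c d, [/\ c \in S, d \in S & [set c; d] = e].
Proof.
elim: s a => [|b s IH] a /=; first by rewrite connect0.
case/andP => /and3P[hab ha hb] hs hc.
case hE: ([set a; b] == e); first by exists a, b; split => //; apply/eqP.
apply: IH hs _; apply: contra hc => h.
by apply: connect_trans h; apply: connect1; rewrite /adj_del hab hE.
Qed.

Lemma in_S_pq (B : {set X}) (S : {set V}) x y :
  spans adj phi B S -> x \in B -> y \in B -> cd (phi x) p -> ~~ cd (phi y) p ->
  (p \in S) && (q \in S).
Proof.
case/andP => /subsetP hsub /forallP hc hx hy hxp hyp.
have Sx : phi x \in S by apply: hsub; apply: imset_f.
have Sy : phi y \in S by apply: hsub; apply: imset_f.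
have := hc (phi x); rewrite Sx /= => /forallP /(_ (phi y)); rewrite Sy /=.
move=> /connectP [s hs hl].
have nc : ~~ cd (phi x) (last (phi x) s).
  rewrite -hl; apply: contra hyp => h.
  by apply: connect_trans hxp; rewrite cd_sym.
have [c [d [hcS hdS hcd]]] := @must_cross S _ _ hs nc.
have : p \in e by rewrite he !inE eqxx.
have : q \in e by rewrite he !inE eqxx orbT.
rewrite -hcd !inE => /orP[] /eqP -> /orP[] /eqP ->; by rewrite ?hcS ?hdS.
Qed.


Lemma shrink (B : {set X}) (S : {set V}) :
  spans adj phi B S -> p \in S -> q \in S -> (forall x, x \in B -> cd (phi x) p) ->
  exists S', spans adj phi B S' /\ (#|S'| < #|S|)%N.
Proof.
move=> /andP[/subsetP hsub /forallP hc] hp hq hB.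
have qK : ~~ cd q p by rewrite cd_sym; exact: sep.
have endp a b : [set a; b] = e -> cd a p -> a = p.
  move=> hab ha; have : a \in e by rewrite -hab !inE eqxx.
  rewrite he !inE => /orP[/eqP //| /eqP haq].
  by move: qK; rewrite -haq ha.
have samec a b : cd a b -> cd a p = cd b p.
  by move=> h; apply: (same_connect (sym_connect_sym del_sym) h).
pose S' := S :&: [set z | cd z p].
have key s a : a \in S -> path (fun a b => [&& adj a b, a \in S & b \in S]) a s ->
    cd (last a s) p ->
    (cd a p -> connect (fun a b => [&& adj a b, a \in S' & b \in S']) a (last a s)) /\
    (~~ cd a p -> connect (fun a b => [&& adj a b, a \in S' & b \in S']) p (last a s)).
  elim: s a => [|b s IH] a aS /=.
    by move=> _ aK; split => [_|naK]; [exact: connect0 | by rewrite aK in naK].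
  case/andP => /and3P[hab _ bS] hs hl.
  have [IH1 IH2] := IH b bS hs hl.
  have crs : cd a p != cd b p -> [set a; b] = e.
    move=> hne; apply: (@cross a b hab); apply: contraNF hne => h.
    by rewrite (samec _ _ h).
  case aK: (cd a p); case bK: (cd b p).
  - split => // _; apply: (connect_trans _ (IH1 bK)); apply: connect1.
    by rewrite /= !inE hab aS bS aK bK.
  - split => // _.
    have hab' : [set a; b] = e by apply: crs; rewrite aK bK.
    by rewrite (endp _ _ hab' aK); apply: IH2; rewrite bK.
  - split => // _.
    have hab' : [set a; b] = e by apply: crs; rewrite aK bK.
    rewrite setUC in hab'.
    by rewrite -(endp _ _ hab' bK); apply: IH1.
  - by split => // _; apply: IH2; rewrite bK.
exists S'; split.
- apply/andP; split.
    apply/subsetP => z hz; rewrite !inE hsub //.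
    by case/imsetP: hz => x hx ->; rewrite hB.
  apply/forallP => a; apply/implyP => ha; apply/forallP => b; apply/implyP => hb.
  move: ha hb; rewrite !inE => /andP[aS aK] /andP[bS bK].
  have := hc a; rewrite aS /= => /forallP /(_ b); rewrite bS /=.
  case/connectP => s hs hl.
  have hl' : cd (last a s) p by rewrite -hl.
  have [k1 _] := key s a aS hs hl'.
  by rewrite hl; apply: k1.
- apply: proper_card; rewrite properE subsetIl /=; apply/subsetPn; exists q => //.
  by rewrite !inE (negbTE qK) andbF.
Qed.

End TreeLemmas.

Lemma min_spec (V : finType) (adj : rel V) (X : finType) (phi : X -> V)
    (conn : forall u v, connect adj u v) (B : {set X}) :
  spans adj phi B (min_subtree adj phi B) /\
  forall S, spans adj phi B S -> (#|min_subtree adj phi B| <= #|S|)%N.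
Proof.
have h0 : spans adj phi B setT.
  apply/andP; split; first exact: subsetT.
  apply/forallP => a; apply/implyP => _; apply/forallP => b; apply/implyP => _.
  have -> : connect (fun a b => [&& adj a b, a \in [set: V] & b \in [set: V]]) a b = connect adj a b.
    by apply: eq_connect => x y; rewrite !inE !andbT.
  exact: conn.
rewrite /min_subtree; case: (@arg_minnP _ setT (spans adj phi B) (fun S : {set V} => #|S|) h0) => S hS hmin.
by split.
Qed.

Lemma edge_iff_pq (V : finType) (adj : rel V) (X : finType) (phi : X -> V)
  (sym : symmetric adj) (irr : irreflexive adj) (conn : forall u v, connect adj u v)
  (acyc : acyclic adj) (p q : V) (e : {set V}) (B : {set X}) :
  e = [set p; q] -> adj p q ->
  (e \subset min_subtree adj phi B) =
  (B :&: [set x | connect (adj_del adj e) (phi x) p] != set0) &&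
  (B :&: ~: [set x | connect (adj_del adj e) (phi x) p] != set0).
Proof.
move=> he hpq.
have [hMS hmin] := @min_spec V adj X phi conn B.
have he' : e = [set q; p] by rewrite he setUC.
have hqp : adj q p by rewrite sym.
rewrite {1}he subUset !sub1set.
apply/idP/idP.
- case/andP => pS qS; apply/andP; split; apply/negP => /eqP h0.
  + have hx x : x \in B -> connect (adj_del adj e) (phi x) q.
      move=> xB; have := @cover V adj conn p q e he (phi x); case/orP => // hc.
      have : x \in B :&: [set x | connect (adj_del adj e) (phi x) p] by rewrite !inE xB hc.
      by rewrite h0 inE.
    have [S' [hS' hlt]] := @shrink V adj sym irr acyc q p e he' hqp X phi B _ hMS qS pS hx.
    by move: (hmin _ hS'); rewrite leqNgt hlt.
  + have hx x : x \in B -> connect (adj_del adj e) (phi x) p.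
      move=> xB; apply/negPn/negP => hc.
      have : x \in B :&: ~: [set x | connect (adj_del adj e) (phi x) p] by rewrite !inE xB hc.
      by rewrite h0 inE.
    have [S' [hS' hlt]] := @shrink V adj sym irr acyc p q e he hpq X phi B _ hMS pS qS hx.
    by move: (hmin _ hS'); rewrite leqNgt hlt.
- case/andP => /set0Pn[x] /setIP[xB] /[!inE] hx /set0Pn[y] /setIP[yB] /[!inE] hy.
  exact: (@in_S_pq V adj sym p q e he X phi B _ x y hMS xB yB hx hy).
Qed.

Lemma edge_iff (V : finType) (adj : rel V) (X : finType) (phi : X -> V)
  (sym : symmetric adj) (irr : irreflexive adj) (conn : forall u v, connect adj u v)
  (acyc : acyclic adj) (e : {set V}) (B : {set X}) :
  e \in edges adj ->
  (e \subset min_subtree adj phi B) =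
  (B :&: split_side adj phi e != set0) && (B :&: ~: split_side adj phi e != set0).
Proof.
rewrite inE => /existsP[u /existsP[v /andP[huv /eqP he]]].
rewrite /split_side; case: pickP => [u0 hu0 | hnone]; last first.
  by have := hnone u; rewrite he !inE eqxx.
move: hu0; rewrite {1}he !inE => /orP[] /eqP ->.
  exact: (@edge_iff_pq V adj X phi sym irr conn acyc u v e B he huv).
have he' : e = [set v; u] by rewrite he setUC.
have hvu : adj v u by rewrite sym.
exact: (@edge_iff_pq V adj X phi sym irr conn acyc v u e B he' hvu).
Qed.
Local Open Scope ring_scope.

Lemma size_euler_seq n : size (euler_seq n) = n.+1.
Proof. by elim: n => //= n IH; rewrite size_rcons IH. Qed.

Lemma euler_seq_nth n j : ((euler_seq (n + j))`_n = euler n)%R.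
Proof.
elim: j => [|j IH]; first by rewrite addn0.
rewrite addnS /= nth_rcons size_euler_seq ltnS leq_addr IH //.
Qed.

Lemma euler0 : euler 0 = 1. Proof. by []. Qed.

Lemma euler_rec m :
  \sum_(k < m.+1) ('C(m, k))%:Z * (~~ odd (m - k))%:Z * euler k = (m == 0%N)%:Z.
Proof.
case: m => [|m]; first by rewrite big_ord1 /=.
rewrite big_ord_recr /= subnn binn /= mul1r.
rewrite {2}/euler /= nth_rcons size_euler_seq ltnn eqxx.
rewrite [X in _ - X]big_mkcond /= -sumrB.
apply: big1 => i _.
rewrite -(euler_seq_nth i (m - i)) subnKC; last by rewrite -ltnS.
by case: (~~ odd _); rewrite ?mulr1 ?mulr0 ?mul0r subrr.
Qed.
From mathcomp Require Import ring.
Section Tri.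
Local Open Scope nat_scope.
Lemma trinom n i j : ('C(n, i) * 'C(n - i, j) = 'C(n, i + j) * 'C(i + j, i))%N.
Proof.
case: (leqP (i + j) n) => hij; last first.
  case: (leqP i n) => hi.
    by rewrite (bin_small hij) (@bin_small (n - i) j) ?muln0 // ltn_subLR.
  by rewrite (bin_small hi) (@bin_small n (i+j)) ?mul0n // (leq_trans hi) // ltnS leq_addr.
apply/eqP; rewrite -(@eqn_pmul2r (i`! * j`! * (n - i - j)`!)); last first.
  by rewrite !muln_gt0 !fact_gt0.
have h1 : i <= n by apply: leq_trans hij; rewrite leq_addr.
have h2 : j <= n - i by rewrite leq_subRL.
have e1 := bin_fact h2. have e2 := bin_fact h1.
have e3 := bin_fact hij. have e4 := bin_fact (leq_addr j i).
rewrite addKn in e4. rewrite -subnDA in e1.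
rewrite -subnDA.
apply/eqP; transitivity n`!.
  rewrite -e2 -e1.
  move: ('C(n, i)) ('C(n - i, j)) (i`!) (j`!) ((n - (i + j))`!) => a b c d f; ring.
rewrite -e3 -e4.
move: ('C(n, i+j)) ('C(i+j, i)) (i`!) (j`!) ((n - (i + j))`!) => a b c d f; ring.
Qed.
End Tri.

Section Conv.
Variable R : comNzRingType.

Definition conv (f g : nat -> R) (n : nat) : R :=
  \sum_(i < n.+1) f i * g (n - i)%N *+ 'C(n, i).

Lemma sum_widen (F : nat -> R) m n : (m <= n)%N ->
  (forall j, (m <= j)%N -> (j < n)%N -> F j = 0) ->
  \sum_(j < m) F j = \sum_(j < n) F j.
Proof.
move=> mn H0; rewrite -!(big_mkord xpredT) (@big_cat_nat _ _ _ m 0 n _ _ (leq0n m) mn) /=.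
rewrite [X in _ = _ + X]big_nat_cond [X in _ = _ + X]big1 ?addr0 // => j /andP[/andP[h1 h2] _].
exact: H0.
Qed.

Lemma conv_comm f g n : conv f g n = conv g f n.
Proof.
rewrite /conv (reindex_inj rev_ord_inj) /=; apply: eq_bigr => i _.
rewrite subSS.
rewrite subKn; last by rewrite -ltnS.
rewrite bin_sub; last by rewrite -ltnS.
by rewrite mulrC.
Qed.

Lemma conv_delta f n : conv (fun k => (k == 0%N)%:R) f n = f n.
Proof.
rewrite /conv big_ord_recl /= subn0 bin0 mul1r mulr1n big1 ?addr0 // => i _.
by rewrite mul0r mul0rn.
Qed.

Lemma conv_assoc f g h n : conv (conv f g) h n = conv f (conv g h) n.
Proof.
pose T j i := f j * g (i - j)%N * h (n - i)%N *+ ('C(n, i) * 'C(i, j)).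
transitivity (\sum_(i < n.+1) \sum_(j < n.+1) T j i).
  apply: eq_bigr => i _; rewrite /conv.
  transitivity (\sum_(j < i.+1) T j i).
    rewrite mulr_suml -sumrMnl; apply: eq_bigr => j _.
    by rewrite /T mulrnAl -mulrnA mulnC.
  apply: (@sum_widen (fun j => T j i)); first by rewrite ltn_ord.
  by move=> j hj _; rewrite /T (@bin_small i j) // muln0 mulr0n.
rewrite exchange_big /=; apply: eq_bigr => j _; rewrite /conv.
rewrite mulr_sumr -sumrMnl.
have hj : (j <= n)%N by rewrite -ltnS.
transitivity (\sum_(0 <= i < n.+1) T j i); first by rewrite big_mkord.
rewrite (@big_cat_nat _ _ _ j 0 n.+1 _ _ (leq0n j)) /=; last by rewrite ltnW.
rewrite big_nat_cond big1 ?add0r => [|i /andP[/andP[_ hi] _]]; last first.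
  by rewrite /T (@bin_small i j) // muln0 mulr0n.
rewrite -{1}(add0n j) big_addn subSn // big_mkord.
apply: eq_bigr => k _.
rewrite /T addnK -subnDA [(k + j)%N]addnC mulrnAr -mulrnA mulrA -trinom.
by rewrite mulnC.
Qed.
End Conv.
Arguments conv {R}.

Lemma natb (R : comNzRingType) (b : bool) : ((b : nat)%:R : R) = if b then 1 else 0.
Proof. by case: b. Qed.

Section PolyId.
Variable R : comNzRingType.
Local Notation P := {poly R}.

Definition uX : P := 'X + 1.
Definition vX : P := 1 - 'X.
Definition sE m : P := ((euler m)%:~R)%:P * uX ^+ m.
Definition cE m : P := (((~~ odd m) : nat)%:R)%:P * uX ^+ m.
Definition rE m : P := (((~~ odd m) : nat)%:R * 2)%:P * vX ^+ m.
Definition qE m : P := (((~~ odd m) : nat)%:R * 2 ^+ m)%:P * (1 + 'X ^+ m).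

Lemma conv_sc m : conv sE cE m = (m == 0%N)%:R.
Proof.
transitivity (((\sum_(k < m.+1) ('C(m, k))%:Z * (~~ odd (m - k))%:Z * euler k)%:~R)%:P * uX ^+ m).
  rewrite rmorph_sum /= rmorph_sum /= mulr_suml; apply: eq_bigr => i _.
  have hi : (i <= m)%N by rewrite -ltnS.
  have -> : uX ^+ m = uX ^+ i * uX ^+ (m - i) by rewrite -exprD subnKC.
  rewrite /sE /cE; ring.
rewrite euler_rec; case: m => [|m] /=; first by rewrite expr0 mulr1.
by rewrite mul0r.
Qed.

Lemma conv_cr m : conv cE rE m = qE m.
Proof.
rewrite /conv.
have hsub (i : 'I_m.+1) : odd (m - i) = odd m (+) odd i.
  by rewrite oddB // -ltnS.
case hm: (odd m).
  rewrite /qE hm /= big1 => [|i _]; first by rewrite mul0r polyC0 mul0r.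
  rewrite /cE /rE hsub hm !natb; case: (odd i) => /=.
    ring.
  ring.
transitivity ((vX + uX) ^+ m + (vX + - uX) ^+ m).
  rewrite !exprDn -big_split /=; apply: eq_bigr => i _.
  rewrite /cE /rE hsub hm /= exprNn -signr_odd !natb; case: (odd i) => /=; ring.
have -> : vX + uX = 2 by rewrite /vX /uX; ring.
have -> : vX + - uX = - (2 * 'X) by rewrite /vX /uX; ring.
rewrite exprNn -signr_odd hm expr0 mul1r exprMn /qE hm natb /= mul1r polyC_exp polyC_natr.
ring.
Qed.

Lemma conv_sq m : conv sE qE m = rE m.
Proof.
transitivity (conv sE (conv cE rE) m).
  by apply: eq_bigr => i _; rewrite conv_cr.
rewrite -conv_assoc.
transitivity (conv (fun k => (k == 0%N)%:R) rE m).
  by apply: eq_bigr => i _; rewrite conv_sc.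
exact: conv_delta.
Qed.
End PolyId.

Section Coefs.
Variable R : comNzRingType.

Lemma coef_uX n j : ((uX R) ^+ n)`_j = ('C(n, j))%:R.
Proof.
elim: n j => [|n IH] j.
  by rewrite expr0 coef1 bin0n.
rewrite exprS /uX mulrDl mul1r coefD coefXM -/(uX R).
case: j => [|j] /=; first by rewrite add0r IH !bin0.
by rewrite !IH binS natrD addrC.
Qed.

Lemma coef_vX n j : ((vX R) ^+ n)`_j = (-1) ^+ j * ('C(n, j))%:R.
Proof.
elim: n j => [|n IH] j.
  rewrite expr0 coef1 bin0n; case: j => [|j] /=; [by rewrite expr0 mul1r | by rewrite mulr0].
rewrite exprS /vX mulrBl mul1r coefB coefXM -/(vX R).
case: j => [|j] /=; first by rewrite subr0 IH !bin0.
rewrite !IH binS natrD exprS; ring.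
Qed.
End Coefs.

Section Tri2.
Local Open Scope nat_scope.
Lemma trinom2 N k b : 'C(N, k) * 'C(N - k, b) = 'C(N, b) * 'C(N - b, k).
Proof.
rewrite !trinom [b + k]addnC; congr (_ * _).
by rewrite -[X in 'C(_, X) = _](addnK b k) bin_sub // leq_addl.
Qed.
Lemma trinom3 N k b : k <= b -> 'C(N, k) * 'C(N - k, b - k) = 'C(N, b) * 'C(b, k).
Proof. by move=> kb; rewrite trinom subnKC. Qed.
End Tri2.

Section Core.
Variable R : numFieldType.

Definition wgt N k : R := ((~~ odd k : nat)%:R * 2 ^+ k * (euler (N - k))%:~R).
Definition Hs N a : R := \sum_(k < N.+1) ('C(a, k))%:R * wgt N k.

Lemma core N b : (b <= N)%N -> ~~ odd N -> Hs N (N - b) + Hs N b = 2 * (-1) ^+ b.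
Proof.
move=> hb hN.
have hC : ('C(N, b))%:R != 0 :> R by rewrite pnatr_eq0 -lt0n bin_gt0.
apply: (mulfI hC).
have := congr1 (fun p : {poly R} => p`_b) (conv_sq R N).
rewrite conv_comm /conv coef_sum /rE coefCM coef_vX natb hN /= => E.
rewrite [RHS](_ : _ = 1 * 2 * ((-1) ^+ b * 'C(N, b)%:R)); last ring.
rewrite -E.
rewrite /Hs mulrDr !mulr_sumr -big_split /=; apply: eq_bigr => k _.
rewrite coefMn.
have -> : qE R k * sE R (N - k) = (wgt N k)%:P * ((1 + 'X^k) * uX R ^+ (N - k)).
  rewrite /qE /sE /wgt; ring.
rewrite coefCM mulrDl mul1r coefD coefXnM !coef_uX -mulr_natl.
case: ltnP => hkb.
  rewrite (@bin_small b k) // mul0r mulr0 addr0 addr0.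
  have e1 : ('C(N, k)%:R * 'C(N - k, b)%:R : R) = 'C(N, b)%:R * 'C(N - b, k)%:R.
    by rewrite -!natrM trinom2.
  transitivity (wgt N k * ('C(N, k)%:R * 'C(N - k, b)%:R)); last ring.
  rewrite e1; ring.
have e1 : ('C(N, k)%:R * 'C(N - k, b)%:R : R) = 'C(N, b)%:R * 'C(N - b, k)%:R.
  by rewrite -!natrM trinom2.
have e2 : ('C(N, k)%:R * 'C(N - k, b - k)%:R : R) = 'C(N, b)%:R * 'C(b, k)%:R.
  by rewrite -!natrM trinom3.
transitivity (wgt N k * ('C(N, k)%:R * 'C(N - k, b)%:R) + wgt N k * ('C(N, k)%:R * 'C(N - k, b - k)%:R)); last ring.
rewrite e1 e2; ring.
Qed.
End Core.

Section CS.
Variable R : numFieldType.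

Lemma count_sub (X : finType) (D : {set X}) (f : nat -> R) m : (#|D| <= m)%N ->
  \sum_(B : {set X} | B \subset D) f #|B| = \sum_(k < m.+1) ('C(#|D|, k))%:R * f k.
Proof.
move=> hD.
transitivity (\sum_(B : {set X} | B \subset D) \sum_(k < m.+1) ((#|B| == k) : nat)%:R * f k).
  apply: eq_bigr => B hB.
  have hb : (#|B| < m.+1)%N by rewrite ltnS (leq_trans (subset_leq_card hB)).
  rewrite (bigD1 (Ordinal hb)) //= eqxx mul1r big1 ?addr0 // => i hi.
  rewrite (_ : (#|B| == i) = false) ?mul0r //.
  apply/negbTE; apply: contra hi => /eqP h; apply/eqP; by apply: val_inj; rewrite /= h.
rewrite exchange_big /=; apply: eq_bigr => k _.
rewrite -mulr_suml; congr (_ * _).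
rewrite -cards_draws -sum1_card natr_sum big_mkcond /= [RHS]big_mkcond /=.
apply: eq_bigr => B _; rewrite inE.
by case: (B \subset D); case: (#|B| == k).
Qed.

Lemma sum_cond (X : finType) (P Q : pred {set X}) (F : {set X} -> R) :
  \sum_(B : {set X} | P B && Q B) F B = \sum_(B : {set X} | P B) ((Q B) : nat)%:R * F B.
Proof.
rewrite big_mkcondr /=; apply: eq_bigr => B _.
by case: (Q B); rewrite ?mul1r ?mul0r.
Qed.

Lemma CS (X : finType) (A S : {set X}) : ~~ odd #|A| ->
  \sum_(B : {set X} | (B \subset A) && ~~ odd #|B|)
     (2 ^+ #|B| * (euler (#|A| - #|B|))%:~R *
     (((B :&: S != set0) && (B :&: ~: S != set0)) : nat)%:R : R)
  = 4 * ((odd #|A :&: S|) : nat)%:R.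
Proof.
move=> hA; set N := #|A|.
rewrite sum_cond.
have ind B : (((B :&: S != set0) && (B :&: ~: S != set0)) : nat)%:R =
   1 - ((B \subset ~: S) : nat)%:R - ((B \subset S) : nat)%:R
     + ((B \subset set0) : nat)%:R :> R.
  rewrite !setI_eq0 !disjoints_subset setCK subset0.
  have -> : (B == set0) = (B \subset ~: S) && (B \subset S).
    by rewrite -subsetI setIC setICr subset0.
  by case: (B \subset ~: S); case: (B \subset S); rewrite /=; ring.
have e (D : {set X}) (Q : pred {set X}) :
    (forall B : {set X}, (B \subset A) && Q B = (B \subset D)) -> (#|D| <= N)%N ->
    \sum_(B : {set X} | B \subset A) ((Q B) : nat)%:R * wgt R N #|B| = Hs R N #|D|.
  by move=> H hD; rewrite -sum_cond (eq_bigl _ _ H) (@count_sub _ D _ _ hD).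
transitivity (\sum_(B : {set X} | B \subset A) (wgt R N #|B| - ((B \subset ~: S) : nat)%:R * wgt R N #|B|
   - ((B \subset S) : nat)%:R * wgt R N #|B| + ((B \subset set0) : nat)%:R * wgt R N #|B|)).
  by apply: eq_bigr => B _; rewrite ind /wgt; ring.
rewrite big_split /= !sumrB.
rewrite (@count_sub _ A (fun k => wgt R N k) N (leqnn N)).
rewrite (e (A :&: ~: S)) ?(subset_leq_card (subsetIl _ _)) //; last by move=> B; rewrite subsetI.
rewrite (e (A :&: S)) ?(subset_leq_card (subsetIl _ _)) //; last by move=> B; rewrite subsetI.
rewrite (e set0) ?cards0 //; last first.
  move=> B; case h: (B \subset set0); last by rewrite andbF.
  by rewrite andbT; move: h; rewrite subset0 => /eqP ->; rewrite sub0set.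
have hN : (#|A :&: S| + #|A :&: ~: S| = N)%N by rewrite -setDE cardsID.
have ha : (#|A :&: S| <= N)%N by rewrite -hN leq_addr.
have -> : #|A :&: ~: S| = (N - #|A :&: S|)%N by rewrite -hN addKn.
have c0 := @core R N 0 (leq0n N) hA. have c1 := @core R N _ ha hA.
rewrite subn0 in c0.
rewrite -/(Hs R N N).
move: c0 c1; rewrite expr0 -signr_odd.
case: (odd #|A :&: S|) => /= c0 c1.
  rewrite (_ : Hs R N N = 2 * 1 - Hs R N 0); last by rewrite -c0; ring.
  rewrite (_ : Hs R N (N - #|A :&: S|) = 2 * (-1) ^+ 1 - Hs R N #|A :&: S|); last by rewrite -c1; ring.
  ring.
rewrite (_ : Hs R N N = 2 * 1 - Hs R N 0); last by rewrite -c0; ring.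
rewrite (_ : Hs R N (N - #|A :&: S|) = 2 * (-1) ^+ 0 - Hs R N #|A :&: S|); last by rewrite -c1; ring.
ring.
Qed.
End CS.

Lemma rhs_swap (R : numFieldType) (X I : finType) (A : {set X}) (P : pred I)
    (c : I -> R) (S : I -> {set X}) : ~~ odd #|A| ->
  4^-1 * \sum_(B : {set X} | (B \subset A) && ~~ odd #|B|)
     2 ^+ #|B| * (euler (#|A| - #|B|))%:~R *
     (\sum_(i | P i) c i * (((B :&: S i != set0) && (B :&: ~: S i != set0)) : nat)%:R)
  = \sum_(i | P i) c i * ((odd #|A :&: S i|) : nat)%:R.
Proof.
move=> hA.
rewrite (eq_bigr (fun B : {set X} => \sum_(i | P i) c i * (2 ^+ #|B| * (euler (#|A| - #|B|))%:~R *
     (((B :&: S i != set0) && (B :&: ~: S i != set0)) : nat)%:R))); last first.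
  by move=> B _; rewrite mulr_sumr; apply: eq_bigr => i _; ring.
rewrite exchange_big /= mulr_sumr; apply: eq_bigr => i _.
rewrite -mulr_sumr (@CS R _ _ (S i) hA).
have h4 : (4 : R) != 0 by rewrite pnatr_eq0.
by rewrite mulrCA [4^-1 * _]mulrA mulVf // mul1r.
Qed.

Lemma odd_compl (X : finType) (A B : {set X}) : ~~ odd #|A| -> odd #|A :&: ~: B| = odd #|A :&: B|.
Proof.
move=> hA; have := cardsID B A; rewrite setDE => h.
move: hA; rewrite -h oddD; case: (odd #|A :&: B|); case: (odd _) => //.
Qed.

Lemma part1 (R : realFieldType) (X : finType) (A : {set X}) (p : {set X} -> R) :
  ~~ odd #|A| ->
  gammaA p A =
    4^-1 * \sum_(B : {set X} | (B \subset A) && ~~ odd #|B|)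
             2 ^+ #|B| * (euler (#|A| - #|B|))%:~R * sC p B.
Proof.
move=> hA.
have hs (B : {set X}) : sC p B = \sum_(B' : {set X} | true) p B' *
   (((B :&: B' != set0) && (B :&: ~: B' != set0)) : nat)%:R.
  rewrite /sC (big_mkcond (fun B' => B' \in Sset B)) /=; apply: eq_bigr => B' _.
  by rewrite /Sset inE; case: (_ && _); rewrite /= ?mulr1 ?mulr0.
rewrite (eq_bigr (fun B : {set X} => 2 ^+ #|B| * (euler (#|A| - #|B|))%:~R *
   \sum_(B' : {set X} | true) p B' *
   (((B :&: B' != set0) && (B :&: ~: B' != set0)) : nat)%:R)); last by move=> B _; rewrite hs.
rewrite (@rhs_swap R X {set X} A xpredT p id hA) /=.
rewrite /gammaA /ptilde -mulr_suml big_split /=.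
rewrite [X in _ + X](reindex_inj (@setC_inj X)) /=.
rewrite (eq_bigl (fun B : {set X} => odd #|A :&: B|) (fun B => p (~: ~: B))); last first.
  by move=> B; rewrite odd_compl.
rewrite (eq_bigr _ (fun B _ => congr1 p (setCK B))).
have h2 : (2 : R) != 0 by rewrite pnatr_eq0.
have e2 (x : R) : x *+ 2 / 2 = x by field.
rewrite -mulr2n e2 big_mkcond /=; apply: eq_bigr => B _.
by case: (odd _); rewrite /= ?mulr1 ?mulr0.
Qed.

Lemma sum_pred1 (R : numFieldType) (X : finType) (P : pred {set X}) (S : {set X}) :
  \sum_(B : {set X} | P B) ((B == S) : nat)%:R = ((P S) : nat)%:R :> R.
Proof.
rewrite big_mkcond /= (bigD1 S) //= eqxx big1 ?addr0 => [|B hB].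
  by case: (P S).
by rewrite (negbTE hB); case: (P B).
Qed.

Lemma cnt (R : numFieldType) (X : finType) (A S : {set X}) : ~~ odd #|A| ->
  \sum_(B : {set X} | odd #|A :&: B|) (((S == B) || (S == ~: B)) : nat)%:R
    = 2 * ((odd #|A :&: S|) : nat)%:R :> R.
Proof.
move=> hA.
case hS: (S == ~: S).
  have hx (x : X) : False.
    have e : S = ~: S by apply/eqP.
    have : x \in S = (x \in ~: S) by rewrite -e.
    by rewrite inE; case: (x \in S).
  have h0 (B : {set X}) : A :&: B = set0 by apply/setP => x; case: (hx x).
  rewrite h0 cards0 /= mulr0 big_pred0 // => B; rewrite h0 cards0.
  by [].
rewrite (eq_bigr (fun B => ((B == S) : nat)%:R + ((B == ~: S) : nat)%:R)); last first.
  move=> B _.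
  have -> : (S == ~: B) = (B == ~: S).
    by rewrite -{1}(setCK S) (inj_eq (@setC_inj X)) eq_sym.
  rewrite [S == B]eq_sym.
  case e1: (B == S); case e2: (B == ~: S) => //=.
  by move/eqP: e1 => e1; move/eqP: e2; rewrite e1 => e2; rewrite -e2 eqxx in hS.
  by rewrite addr0.
  by rewrite add0r.
  by rewrite addr0.
rewrite big_split /= !sum_pred1 odd_compl //; ring.
Qed.

Lemma deltaC_eq (R : realFieldType) (V : finType) (adj : rel V) (X : finType) (phi : X -> V)
  (w : {set V} -> R)
  (sym : symmetric adj) (irr : irreflexive adj) (conn : forall u v, connect adj u v)
  (acyc : acyclic adj) (B : {set X}) :
  deltaC adj phi w B = \sum_(e | e \in edges adj) w e *
    (((B :&: split_side adj phi e != set0) && (B :&: ~: split_side adj phi e != set0)) : nat)%:R.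
Proof.
rewrite /deltaC; case: ifP => hB.
  rewrite big1 // => e _; case h: (_ && _); last by rewrite mulr0.
  exfalso; case/andP: h => /set0Pn[x /setIP[xB xS]] /set0Pn[y /setIP[yB yS]].
  have hxy : x != y by apply: contraTneq yS => <-; rewrite inE xS.
  have : (#|[set x; y]| <= #|B|)%N by apply: subset_leq_card; rewrite subUset !sub1set xB yB.
  by rewrite cards2 hxy => h2; have := leq_trans h2 hB.
rewrite big_mkcondr /=; apply: eq_bigr => e he.
rewrite (@edge_iff V adj X phi sym irr conn acyc e B he).
by case: (_ && _); rewrite ?mulr1 ?mulr0.
Qed.

Lemma muA_eq (R : realFieldType) (V : finType) (adj : rel V) (X : finType) (phi : X -> V)
  (w : {set V} -> R) (A : {set X}) : ~~ odd #|A| ->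
  muA adj phi w A = \sum_(e | e \in edges adj) w e * ((odd #|A :&: split_side adj phi e|) : nat)%:R.
Proof.
move=> hA; rewrite /muA /wtilde /w_split.
transitivity ((\sum_(B : {set X} | odd #|A :&: B|) \sum_(e | e \in edges adj)
   w e * (((split_side adj phi e == B) || (split_side adj phi e == ~: B)) : nat)%:R) / 2).
  rewrite mulr_suml; apply: eq_bigr => B _; congr (_ / 2).
  rewrite big_mkcondr /=; apply: eq_bigr => e _.
  by case: (_ || _); rewrite ?mulr1 ?mulr0.
rewrite exchange_big /= mulr_suml; apply: eq_bigr => e _.
rewrite -mulr_sumr cnt //; field.
by [].
Qed.

Theorem theorem6 :
  (forall (R : realFieldType) (X : finType) (A : {set X}) (p : {set X} -> R),
     ~~ odd #|A| ->
     (forall B, 0 <= p B) -> \sum_(B : {set X}) p B = 1 ->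
     gammaA p A =
       4^-1 * \sum_(B : {set X} | (B \subset A) && ~~ odd #|B|)
                2 ^+ #|B| * (euler (#|A| - #|B|))%:~R * sC p B)
  /\
  (forall (R : realFieldType) (X V : finType) (adj : rel V) (phi : X -> V)
          (w : {set V} -> R) (A : {set X}),
     phylo_tree adj phi ->
     (forall e, e \in edges adj -> 0 <= w e) ->
     ~~ odd #|A| ->
     muA adj phi w A =
       4^-1 * \sum_(B : {set X} | (B \subset A) && ~~ odd #|B|)
                2 ^+ #|B| * (euler (#|A| - #|B|))%:~R * deltaC adj phi w B).
Proof.
split.
  by move=> R X A p hA _ _; exact: part1.
move=> R X V adj phi w A [[sym [irr [conn acyc]]] _] _ hA.
rewrite (@muA_eq R V adj X phi w A hA).
rewrite (eq_bigr (fun B : {set X} => 2 ^+ #|B| * (euler (#|A| - #|B|))%:~R *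
   \sum_(e | e \in edges adj) w e *
    (((B :&: split_side adj phi e != set0) && (B :&: ~: split_side adj phi e != set0)) : nat)%:R));
  last by move=> B _; rewrite (@deltaC_eq R V adj X phi w sym irr conn acyc B).
by rewrite (@rhs_swap R X {set V} A (fun e => e \in edges adj) w (split_side adj phi) hA).
Qed.
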